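(* (1) Let $(D,\dashv,\vdash)$ be a pre-dialgebra of type I. Then setting $a\prec b=a\dashv b$ and $a\succ b=a\vdash b-a\dashv b$ makes $(D,\prec,\succ)$ a dendriform algebra. (2) Let $(D,\dashv,\vdash)$ be a pre-dialgebra of type III. Then setting $a\succ b=a\vdash b$ and $a\prec b=a\dashv b-a\vdash b$ makes $(D,\prec,\succ)$ a dendriform algebra. (3) Conversely, any dendriform algebra $(E,\prec,\succ)$ with $\prec$ associative is a pre-dialgebra of type I with $a\dashv b=a\prec b$, $a\vdash b=a\prec b+a\succ b$; and any dendriform algebra with $\succ$ associative is a pre-dialgebra of type III with $a\vdash b=a\succ b$, $a\dashv b=a\prec b+a\succ b$.
   Context: All spaces are $k$-vector spaces and operations bilinear. A dialgebra is a vector space with two associative operations $\dashv,\vdash$ satisfying (1) $x\dashv(y\dashv z)=x\dashv(y\vdash z)$, (2) $(x\vdash y)\dashv z=x\vdash(y\dashv z)$, (3) $(x\dashv y)\vdash z=(x\vdash y)\vdash z$. A pre-dialgebra of type I (resp. type III) is a vector space with two associative operations $\dashv,\vdash$ satisfying axioms (1) and (2) (resp. (2) and (3)). A dendriform algebra is a vector space $E$ with two operations $\prec,\succ$ satisfying $(a\prec b)\prec c=a\prec(b\prec c)+a\prec(b\succ c)$, $(a\succ b)\prec c=a\succ(b\prec c)$, and $(a\prec b)\succ c+(a\succ b)\succ c=a\succ(b\succ c)$ for all $a,b,c$. *)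

(* Defs.v *)
From HB Require Import structures.
From mathcomp Require Import all_boot all_algebra.
Set Implicit Arguments. Unset Strict Implicit. Unset Printing Implicit Defensive.
Import GRing.Theory.
Local Open Scope ring_scope.

Definition bilinear_op (K : fieldType) (V : lmodType K) (op : V -> V -> V) : Prop :=
  (forall (a : K) (x y z : V), op (a *: x + y) z = a *: op x z + op y z) /\
  (forall (a : K) (x y z : V), op z (a *: x + y) = a *: op z x + op z y).

Definition assoc_op (V : Type) (op : V -> V -> V) : Prop :=
  forall x y z, op (op x y) z = op x (op y z).

(* axioms (1),(2),(3); dl = -|, dr = |- *)
Definition dialg_ax1 (V : Type) (dl dr : V -> V -> V) : Prop :=
  forall x y z, dl x (dl y z) = dl x (dr y z).
Definition dialg_ax2 (V : Type) (dl dr : V -> V -> V) : Prop :=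
  forall x y z, dl (dr x y) z = dr x (dl y z).
Definition dialg_ax3 (V : Type) (dl dr : V -> V -> V) : Prop :=
  forall x y z, dr (dl x y) z = dr (dr x y) z.

Definition pre_dialgebra_I (K : fieldType) (V : lmodType K) (dl dr : V -> V -> V) : Prop :=
  [/\ bilinear_op dl /\ bilinear_op dr, assoc_op dl, assoc_op dr,
      dialg_ax1 dl dr & dialg_ax2 dl dr].

Definition pre_dialgebra_III (K : fieldType) (V : lmodType K) (dl dr : V -> V -> V) : Prop :=
  [/\ bilinear_op dl /\ bilinear_op dr, assoc_op dl, assoc_op dr,
      dialg_ax2 dl dr & dialg_ax3 dl dr].

Definition dendriform (K : fieldType) (V : lmodType K) (prec succ : V -> V -> V) : Prop :=
  [/\ bilinear_op prec, bilinear_op succ,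
      (forall a b c, prec (prec a b) c = prec a (prec b c) + prec a (succ b c)),
      (forall a b c, prec (succ a b) c = succ a (prec b c)) &
      (forall a b c, succ (prec a b) c + succ (succ a b) c = succ a (succ b c))].

(* Main.v *)
Require Import Defs.
From mathcomp Require Import all_boot all_algebra.
Import GRing.Theory.
Local Open Scope ring_scope.
Section S.
Context {K : fieldType} {V : lmodType K}.
Implicit Types op : V -> V -> V.
Lemma bl_addl {op} : bilinear_op op -> forall x y z, op (x+y) z = op x z + op y z.
Proof. by move=> [H _] x y z; rewrite -[x]scale1r H !scale1r. Qed.
Lemma bl_subl {op} : bilinear_op op -> forall x y z, op (x-y) z = op x z - op y z.
Proof. by move=> [H _] x y z; rewrite addrC -scaleN1r H scaleN1r addrC. Qed.
Lemma bl_addr {op} : bilinear_op op -> forall x y z, op z (x+y) = op z x + op z y.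
Proof. by move=> [_ H] x y z; rewrite -[x]scale1r H !scale1r. Qed.
Lemma bl_subr {op} : bilinear_op op -> forall x y z, op z (x-y) = op z x - op z y.
Proof. by move=> [_ H] x y z; rewrite addrC -scaleN1r H scaleN1r addrC. Qed.
Lemma bl_sub {op1 op2} : bilinear_op op1 -> bilinear_op op2 ->
  bilinear_op (fun a b => op1 a b - op2 a b).
Proof.
move=> [H1 H2] [H3 H4]; split=> a x y z /=.
  by rewrite H1 H3 scalerBr opprD addrACA.
by rewrite H2 H4 scalerBr opprD addrACA.
Qed.
Lemma bl_add {op1 op2} : bilinear_op op1 -> bilinear_op op2 ->
  bilinear_op (fun a b => op1 a b + op2 a b).
Proof.
move=> [H1 H2] [H3 H4]; split=> a x y z /=.
  by rewrite H1 H3 scalerDr addrACA.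
by rewrite H2 H4 scalerDr addrACA.
Qed.
End S.

Theorem mainTheorem10 (K : fieldType) (V : lmodType K) :
  (forall dl dr : V -> V -> V, pre_dialgebra_I dl dr ->
     dendriform dl (fun a b => dr a b - dl a b)) /\
  (forall dl dr : V -> V -> V, pre_dialgebra_III dl dr ->
     dendriform (fun a b => dl a b - dr a b) dr) /\
  (forall prec succ : V -> V -> V, dendriform prec succ -> assoc_op prec ->
     pre_dialgebra_I prec (fun a b => prec a b + succ a b)) /\
  (forall prec succ : V -> V -> V, dendriform prec succ -> assoc_op succ ->
     pre_dialgebra_III (fun a b => prec a b + succ a b) succ).
Proof.
split; [|split; [|split]].
- move=> dl dr [[Bl Br] Al Ar X1 X2]; split => // [|a b c|a b c|a b c].
  + exact: bl_sub.
  + by rewrite (bl_subr Bl) X1 Al addrC subrK.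
  + by rewrite (bl_subl Bl) X2 Al.
  + rewrite addrC -(bl_addl (bl_sub Br Bl)) subrK /=.
    rewrite !(bl_subr Br, bl_subr Bl) Ar X2 X1; by rewrite subrr subr0.
- move=> dl dr [[Bl Br] Al Ar X2 X3]; split => // [|a b c|a b c|a b c].
  + exact: bl_sub.
  + rewrite -(bl_addr (bl_sub Bl Br)) /= subrK.
    rewrite !(bl_subl Bl, bl_subl Br) X2 X3 Al.
    by rewrite subrr subr0.
  + by rewrite X2 (bl_subr Br) Ar.
  + by rewrite (bl_subl Br) subrK X3 Ar.
- move=> p s [Bp Bs D1 D2 D3] Ap.
  have Z : forall a b c, p a (s b c) = 0.
    by move=> a b c; apply: (addrI (p a (p b c))); rewrite addr0 -D1 Ap.
  split => // [|x y z|a b c|a b c].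
  + by split => //; exact: bl_add.
  + rewrite !(bl_addl Bp, bl_addl Bs, bl_addr Bp, bl_addr Bs) D1 D2 -D3.
    by rewrite !addrA.
  + by rewrite (bl_addr Bp) Z addr0.
  + by rewrite (bl_addl Bp) Ap D2.
- move=> p s [Bp Bs D1 D2 D3] As.
  have Z : forall a b c, s (p a b) c = 0.
    by move=> a b c; apply: (addIr (s a (s b c))); rewrite add0r -{1}As; exact: D3.
  split => // [|x y z|a b c|a b c].
  + by split => //; exact: bl_add.
  + rewrite !(bl_addl Bp, bl_addl Bs, bl_addr Bp, bl_addr Bs) D1 D2 -D3.
    by rewrite !addrA.
  + by rewrite (bl_addr Bs) -D2 As.
  + by rewrite (bl_addl Bs) Z add0r.
Qed.
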